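(* Let $\mathsf{M}_1,\mathsf{M}_2$ be two unbiased dichotomic qubit measurements, i.e. $\mathsf{M}_1(\pm1)=\frac12(I\pm\vec a\cdot\vec\sigma)$ and $\mathsf{M}_2(\pm1)=\frac12(I\pm\vec b\cdot\vec\sigma)$ with $\vec a,\vec b\in\mathbb{R}^3$, $\|\vec a\|,\|\vec b\|\leq1$. Then $\mathsf{M}_1$ and $\mathsf{M}_2$ are incompatible if and only if they are useful for $(2,2)$-QRAC, i.e. if and only if $$\frac{1}{8}\sum_{x,y=\pm1}\big\|\mathsf{M}_1(x)+\mathsf{M}_2(y)\big\|>\frac34 .$$
   Context: $\vec\sigma=(\sigma_1,\sigma_2,\sigma_3)$ are the Pauli matrices, $I$ the identity on $\mathbb{C}^2$, and $\|\cdot\|$ the operator norm. Two POVMs are compatible if there is a POVM $\mathsf{G}(x,y)$ whose marginals $\sum_y\mathsf{G}(x,y)$ and $\sum_x\mathsf{G}(x,y)$ are $\mathsf{M}_1(x)$ and $\mathsf{M}_2(y)$; otherwise incompatible. The left-hand side of the displayed inequality is the optimal average success probability $\bar P_{\rm qrac}(\mathsf{M}_1,\mathsf{M}_2)$ in the $(2,2)$ quantum random access code, and $3/4$ is the optimal classical $(2,2)$ random access code success probability. *)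

(* Defs.v *)
From HB Require Import structures.
From mathcomp Require Import all_boot all_order all_algebra.
From mathcomp Require Import complex.
From mathcomp Require Import boolp classical_sets reals.

Set Implicit Arguments.
Unset Strict Implicit.
Unset Printing Implicit Defensive.

Import Order.TTheory GRing.Theory Num.Theory.
Local Open Scope ring_scope.
Local Open Scope complex_scope.

Section QRAC.
Variable R : realType.
Local Notation C := R[i].

Definition sigma1 : 'M[C]_2 := \matrix_(i < 2, j < 2) (if i == j then 0 else 1).
Definition sigma2 : 'M[C]_2 :=
  \matrix_(i < 2, j < 2)
    (if i == j then 0 else if i == ord0 then - 'i else 'i).
Definition sigma3 : 'M[C]_2 :=
  \matrix_(i < 2, j < 2) (if i == j then (if i == ord0 then 1 else -1) else 0).

Definition dot_sigma (a : 'cV[R]_3) : 'M[C]_2 :=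
  (a ord0 ord0)%:C *: sigma1 + (a (inord 1) ord0)%:C *: sigma2
  + (a (inord 2) ord0)%:C *: sigma3.

Definition rnorm2 (a : 'cV[R]_3) : R := \sum_i (a i ord0) ^+ 2.

(* outcomes +1 / -1 are encoded by true / false *)
Definition sgn (x : bool) : R := if x then 1 else -1.

Definition dichot (a : 'cV[R]_3) (x : bool) : 'M[C]_2 :=
  (1 / 2 : C) *: (1%:M + (sgn x)%:C *: dot_sigma a).

Definition adj (A : 'M[C]_2) : 'M[C]_2 := (map_mx conjc A)^T.
Definition cadj (v : 'cV[C]_2) : 'rV[C]_2 := (map_mx conjc v)^T.

Definition psd (A : 'M[C]_2) : Prop :=
  adj A = A /\ forall v : 'cV[C]_2, 0 <= (cadj v *m A *m v) ord0 ord0.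

Definition povm (T : finType) (M : T -> 'M[C]_2) : Prop :=
  (forall x, psd (M x)) /\ \sum_x M x = 1%:M.

Definition compatible (M1 M2 : bool -> 'M[C]_2) : Prop :=
  exists G : bool * bool -> 'M[C]_2,
    povm G /\
    (forall x, \sum_y G (x, y) = M1 x) /\
    (forall y, \sum_x G (x, y) = M2 y).

Definition cnorm2 (v : 'cV[C]_2) : R :=
  \sum_i (complex.Re (v i ord0) ^+ 2 + complex.Im (v i ord0) ^+ 2).

Definition opnorm (A : 'M[C]_2) : R :=
  sup [set Num.sqrt (cnorm2 (A *m v)) | v in [set v | cnorm2 v = 1]].

End QRAC.

(* Main.v *)
Require Import Defs.
From HB Require Import structures.
From mathcomp Require Import all_boot all_order all_algebra.
From mathcomp Require Import complex.
From mathcomp Require Import boolp classical_sets reals.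
From mathcomp Require Import ring lra.
Import Order.TTheory GRing.Theory Num.Theory.
Local Open Scope ring_scope.
Local Open Scope complex_scope.
Set Implicit Arguments.
Unset Strict Implicit.

Lemma cE (R : rcfType) (x y : R[i]) : complex.Re x = complex.Re y -> complex.Im x = complex.Im y -> x = y.
Proof. by case: x y => [a b] [c d] /= -> ->. Qed.
Lemma ReD (R : rcfType) (x y : R[i]) : complex.Re (x + y) = complex.Re x + complex.Re y.
Proof. by case: x y => [? ?] [? ?]. Qed.
Lemma ImD (R : rcfType) (x y : R[i]) : complex.Im (x + y) = complex.Im x + complex.Im y.
Proof. by case: x y => [? ?] [? ?]. Qed.
Lemma ReN (R : rcfType) (x : R[i]) : complex.Re (- x) = - complex.Re x.
Proof. by case: x => [? ?]. Qed.
Lemma ImN (R : rcfType) (x : R[i]) : complex.Im (- x) = - complex.Im x.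
Proof. by case: x => [? ?]. Qed.
Lemma ReM (R : rcfType) (x y : R[i]) : complex.Re (x * y) = complex.Re x * complex.Re y - complex.Im x * complex.Im y.
Proof. by case: x y => [? ?] [? ?]. Qed.
Lemma ImM (R : rcfType) (x y : R[i]) : complex.Im (x * y) = complex.Re x * complex.Im y + complex.Im x * complex.Re y.
Proof. by case: x y => [? ?] [? ?]. Qed.
Lemma Re0 (R : rcfType) : complex.Re (0 : R[i]) = 0. Proof. by []. Qed.
Lemma Im0 (R : rcfType) : complex.Im (0 : R[i]) = 0. Proof. by []. Qed.
Lemma Re1 (R : rcfType) : complex.Re (1 : R[i]) = 1. Proof. by []. Qed.
Lemma Im1 (R : rcfType) : complex.Im (1 : R[i]) = 0. Proof. by []. Qed.
Lemma ReJ (R : rcfType) (x : R[i]) : complex.Re (x^*) = complex.Re x. Proof. by case: x. Qed.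
Lemma ImJ (R : rcfType) (x : R[i]) : complex.Im (x^*) = - complex.Im x. Proof. by case: x. Qed.
Lemma ReC (R : rcfType) (k : R) : complex.Re (k%:C) = k. Proof. by []. Qed.
Lemma ImC (R : rcfType) (k : R) : complex.Im (k%:C) = 0. Proof. by []. Qed.
Lemma half_C (R : rcfType) : (1 / 2 : R[i]) = (1 / 2 : R)%:C.
Proof. by rewrite rmorphM rmorph1 fmorphV rmorph_nat. Qed.

Lemma ord2P (i : 'I_2) : i = ord0 \/ i = ord_max.
Proof. by case: i => [[|[|k]] Hk]; [left; apply: val_inj|right; apply: val_inj|]. Qed.


Lemma sum2 (V : nmodType) (F : 'I_2 -> V) : \sum_i F i = F ord0 + F ord_max.
Proof. rewrite !big_ord_recl big_ord0 addr0; congr (_ + F _); exact: val_inj. Qed.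
Lemma sum3 (V : nmodType) (F : 'I_3 -> V) :
  \sum_i F i = F ord0 + F (inord 1) + F (inord 2).
Proof. rewrite !big_ord_recl big_ord0 addr0 addrA; congr (_ + F _ + F _); apply: val_inj; by rewrite /= inordK. Qed.

Definition Pm (R : rcfType) (al d1 d2 d3 : R) : 'M[R[i]]_2 :=
  \matrix_(i, j) if i == j then (if i == ord0 then (al + d3)%:C else (al - d3)%:C)
                else if i == ord0 then Complex d1 (- d2) else Complex d1 d2.

Arguments Pm {R}.
Definition vec2 (R : rcfType) (c0 c1 : R[i]) : 'cV[R[i]]_2 :=
  \col_i (if i == ord0 then c0 else c1).

Arguments vec2 {R}.
Lemma ReX (R : rcfType) (a b : R) : complex.Re (Complex a b) = a. Proof. by []. Qed.
Lemma ImX (R : rcfType) (a b : R) : complex.Im (Complex a b) = b. Proof. by []. Qed.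
Lemma ord01 : (ord0 == ord_max :> 'I_2) = false. Proof. by []. Qed.
Lemma ord10 : (ord_max == ord0 :> 'I_2) = false. Proof. by []. Qed.
Definition crw := (ReX, ImX, ReD, ImD, ReN, ImN, ReM, ImM, Re0, Im0, Re1, Im1, ReJ, ImJ, ReC, ImC).

Lemma dichotE (R : realType) (a : 'cV[R]_3) x :
  dichot a x = Pm (1/2) (sgn R x * a ord0 ord0 / 2) (sgn R x * a (inord 1) ord0 / 2)
     (sgn R x * a (inord 2) ord0 / 2).
Proof.
apply/matrixP => i j; rewrite /dichot /dot_sigma /Pm half_C.
have [->|->] := ord2P i; have [->|->] := ord2P j; rewrite !mxE ?eqxx ?ord01 ?ord10 /=;
apply: cE; rewrite !crw.
all: field.
all: done.
Qed.

Ltac mxcase := apply/matrixP => i j;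
  have [->|->] := ord2P i; have [->|->] := ord2P j;
  rewrite !mxE ?eqxx ?ord01 ?ord10 /=.

Lemma addP (R : rcfType) (al d1 d2 d3 be e1 e2 e3 : R) :
  Pm al d1 d2 d3 + Pm be e1 e2 e3 = Pm (al + be) (d1 + e1) (d2 + e2) (d3 + e3).
Proof. mxcase; apply: cE; rewrite !crw; ring. Qed.

Lemma Pm1 (R : rcfType) : Pm 1 0 0 0 = 1%:M :> 'M[R[i]]_2.
Proof. mxcase; apply: cE; rewrite !crw; ring. Qed.

Lemma Pm_inj (R : rcfType) (al d1 d2 d3 be e1 e2 e3 : R) :
  Pm al d1 d2 d3 = Pm be e1 e2 e3 -> [/\ al = be, d1 = e1, d2 = e2 & d3 = e3].
Proof.
move=> H.
have H00 := congr1 (fun M : 'M_2 => complex.Re (M ord0 ord0)) H.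
have H11 := congr1 (fun M : 'M_2 => complex.Re (M ord_max ord_max)) H.
have H10 := congr1 (fun M : 'M_2 => complex.Re (M ord_max ord0)) H.
have I10 := congr1 (fun M : 'M_2 => complex.Im (M ord_max ord0)) H.
move: H00 H11 H10 I10; rewrite /Pm !mxE ?eqxx ?ord01 ?ord10 /= => H00 H11 H10 I10.
split => //; lra.
Qed.

Lemma vec2E (R : rcfType) (v : 'cV[R[i]]_2) :
  v = vec2 (Complex (complex.Re (v ord0 ord0)) (complex.Im (v ord0 ord0)))
           (Complex (complex.Re (v ord_max ord0)) (complex.Im (v ord_max ord0))).
Proof.
apply/matrixP => i j; rewrite (ord1 j); have [->|->] := ord2P i;
  rewrite !mxE ?eqxx ?ord01 ?ord10 /=; by case: (v _ _).
Qed.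

Lemma cnorm2_vec2 (R : realType) (x1 y1 x2 y2 : R) :
  cnorm2 (vec2 (Complex x1 y1) (Complex x2 y2)) = x1^+2 + y1^+2 + x2^+2 + y2^+2.
Proof. rewrite /cnorm2 sum2 !mxE ?eqxx ?ord01 ?ord10 /=; ring. Qed.

Lemma Pm_mulv (R : rcfType) (al d1 d2 d3 x1 y1 x2 y2 : R) :
  Pm al d1 d2 d3 *m vec2 (Complex x1 y1) (Complex x2 y2) =
  vec2 (Complex ((al + d3) * x1 + d1 * x2 + d2 * y2) ((al + d3) * y1 + d1 * y2 - d2 * x2))
       (Complex (d1 * x1 - d2 * y1 + (al - d3) * x2) (d1 * y1 + d2 * x1 + (al - d3) * y2)).
Proof.
apply/matrixP => i j; rewrite (ord1 j); have [->|->] := ord2P i;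
  rewrite !mxE sum2 !mxE ?eqxx ?ord01 ?ord10 /=; apply: cE; rewrite !crw; ring.
Qed.

Definition QF (R : rcfType) (al d1 d2 d3 x1 y1 x2 y2 : R) : R :=
  al * (x1^+2 + y1^+2 + x2^+2 + y2^+2) + d3 * (x1^+2 + y1^+2 - x2^+2 - y2^+2)
  + 2 * d1 * (x1 * x2 + y1 * y2) + 2 * d2 * (x1 * y2 - y1 * x2).

Arguments QF {R}.
Lemma qfE (R : realType) (al d1 d2 d3 x1 y1 x2 y2 : R) :
  (cadj (vec2 (Complex x1 y1) (Complex x2 y2)) *m Pm al d1 d2 d3
     *m vec2 (Complex x1 y1) (Complex x2 y2)) ord0 ord0
  = (QF al d1 d2 d3 x1 y1 x2 y2)%:C.
Proof.
rewrite -mulmxA Pm_mulv !mxE sum2 !mxE ?eqxx ?ord01 ?ord10 /=.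
apply: cE; rewrite !crw /QF; ring.
Qed.

Lemma adj_Pm (R : realType) (al d1 d2 d3 : R) : adj (Pm al d1 d2 d3) = Pm al d1 d2 d3.
Proof. rewrite /adj; mxcase; apply: cE; rewrite !crw; ring. Qed.

Lemma herm_Pm (R : realType) (A : 'M[R[i]]_2) : adj A = A ->
  A = Pm ((complex.Re (A ord0 ord0) + complex.Re (A ord_max ord_max)) / 2)
         (complex.Re (A ord_max ord0)) (complex.Im (A ord_max ord0))
         ((complex.Re (A ord0 ord0) - complex.Re (A ord_max ord_max)) / 2).
Proof.
move=> H.
have E i j : A i j = (A j i)^*.
  by rewrite -{1}H /adj !mxE.
have Hi : complex.Im (A ord0 ord0) = 0.
  have := congr1 (@complex.Im R) (E ord0 ord0); rewrite ImJ; lra.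
have Hj : complex.Im (A ord_max ord_max) = 0.
  have := congr1 (@complex.Im R) (E ord_max ord_max); rewrite ImJ; lra.
apply/matrixP => i j;
  have [->|->] := ord2P i; have [->|->] := ord2P j;
  rewrite [in RHS]mxE ?eqxx ?ord01 ?ord10 /=; apply: cE; rewrite ?crw //; try field.
all: try done.
all: rewrite (E ord0 ord_max) !crw //.
Qed.

Lemma sq_sqrt (R : rcfType) (x : R) : 0 <= x -> Num.sqrt (x ^+ 2) = x.
Proof. by move=> h; rewrite sqrtr_sqr ger0_norm. Qed.

Lemma sqrt_le (R : rcfType) (y X : R) : 0 <= X -> y <= X ^+ 2 -> Num.sqrt y <= X.
Proof.
move=> hX hy; rewrite -(sq_sqrt hX) ler_sqrt //; exact: sqr_ge0.
Qed.

Lemma CS3 (R : rcfType) (d1 d2 d3 b1 b2 b3 : R) :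
  (d1 * b1 + d2 * b2 + d3 * b3) ^+ 2 <=
  (d1 ^+ 2 + d2 ^+ 2 + d3 ^+ 2) * (b1 ^+ 2 + b2 ^+ 2 + b3 ^+ 2).
Proof.
rewrite -subr_ge0.
have -> : (d1 ^+ 2 + d2 ^+ 2 + d3 ^+ 2) * (b1 ^+ 2 + b2 ^+ 2 + b3 ^+ 2) -
  (d1 * b1 + d2 * b2 + d3 * b3) ^+ 2 =
  (d1 * b2 - d2 * b1) ^+ 2 + (d1 * b3 - d3 * b1) ^+ 2 + (d2 * b3 - d3 * b2) ^+ 2
  by ring.
by rewrite !addr_ge0 ?sqr_ge0.
Qed.

Lemma sqle (R : rcfType) (X Y : R) : 0 <= X -> Y ^+ 2 <= X ^+ 2 -> 0 <= X + Y.
Proof. move=> h1 h2; nra. Qed.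

Lemma sqle' (R : rcfType) (X Y : R) : 0 <= X -> Y ^+ 2 <= X ^+ 2 -> Y <= X.
Proof. move=> h1 h2; nra. Qed.

Lemma dB_le (R : rcfType) (d1 d2 d3 x1 y1 x2 y2 : R) :
  (QF 0 d1 d2 d3 x1 y1 x2 y2) ^+ 2 <=
  (d1 ^+ 2 + d2 ^+ 2 + d3 ^+ 2) * (x1^+2 + y1^+2 + x2^+2 + y2^+2) ^+ 2.
Proof.
have := CS3 d1 d2 d3 (2 * (x1 * x2 + y1 * y2)) (2 * (x1 * y2 - y1 * x2))
  (x1^+2 + y1^+2 - x2^+2 - y2^+2).
have -> : (2 * (x1 * x2 + y1 * y2)) ^+ 2 + (2 * (x1 * y2 - y1 * x2)) ^+ 2 +
  (x1^+2 + y1^+2 - x2^+2 - y2^+2) ^+ 2 = (x1^+2 + y1^+2 + x2^+2 + y2^+2) ^+ 2 by ring.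
have -> : QF 0 d1 d2 d3 x1 y1 x2 y2 = d1 * (2 * (x1 * x2 + y1 * y2)) +
   d2 * (2 * (x1 * y2 - y1 * x2)) + d3 * (x1^+2 + y1^+2 - x2^+2 - y2^+2)
  by rewrite /QF; ring.
done.
Qed.

Lemma QF_split (R : rcfType) (al d1 d2 d3 x1 y1 x2 y2 : R) :
  QF al d1 d2 d3 x1 y1 x2 y2 = al * (x1^+2 + y1^+2 + x2^+2 + y2^+2) + QF 0 d1 d2 d3 x1 y1 x2 y2.
Proof. rewrite /QF; ring. Qed.

Lemma QF_ge0 (R : rcfType) (al d1 d2 d3 x1 y1 x2 y2 : R) :
  0 <= al -> d1 ^+ 2 + d2 ^+ 2 + d3 ^+ 2 <= al ^+ 2 -> 0 <= QF al d1 d2 d3 x1 y1 x2 y2.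
Proof.
move=> h1 h2; rewrite QF_split; apply: sqle.
  by apply: mulr_ge0 => //; rewrite !addr_ge0 ?sqr_ge0.
apply: (le_trans (dB_le _ _ _ _ _ _ _)).
rewrite exprMn; apply: ler_wpM2r => //; exact: sqr_ge0.
Qed.

Lemma psd_Pm (R : realType) (al d1 d2 d3 : R) :
  0 <= al -> d1 ^+ 2 + d2 ^+ 2 + d3 ^+ 2 <= al ^+ 2 -> psd (Pm al d1 d2 d3).
Proof.
move=> h1 h2; split; first exact: adj_Pm.
move=> v; rewrite (vec2E v) qfE ler0c; exact: QF_ge0.
Qed.

Lemma ge0_eq (R : rcfType) (a b : R) : a = b -> 0 <= a -> 0 <= b.
Proof. by move=> ->. Qed.

Lemma Pm_psd (R : realType) (A : 'M[R[i]]_2) : psd A ->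
  exists al d1 d2 d3, [/\ A = Pm al d1 d2 d3, 0 <= al & d1 ^+ 2 + d2 ^+ 2 + d3 ^+ 2 <= al ^+ 2].
Proof.
case=> Hh Hp; have HA := herm_Pm Hh.
move: HA; set p := complex.Re (A ord0 ord0); set q := complex.Re (A ord_max ord_max).
set z1 := complex.Re (A ord_max ord0); set z2 := complex.Im (A ord_max ord0) => HA.
have Q x1 y1 x2 y2 : 0 <= p * (x1^+2 + y1^+2) + q * (x2^+2 + y2^+2)
    + 2 * z1 * (x1 * x2 + y1 * y2) + 2 * z2 * (x1 * y2 - y1 * x2).
  have := Hp (vec2 (Complex x1 y1) (Complex x2 y2)).
  rewrite {1}HA qfE ler0c /QF; apply: ge0_eq.
  by field.
have hp : 0 <= p by have := Q 1 0 0 0; lra.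
have hq : 0 <= q by have := Q 0 0 1 0; lra.
have F1 : 0 <= q * (p * q - (z1 ^+ 2 + z2 ^+ 2)).
  have := Q q 0 (- z1) (- z2); apply: ge0_eq; ring.
have F2 : 0 <= p * (p * q - (z1 ^+ 2 + z2 ^+ 2)).
  have := Q (- z1) z2 p 0; apply: ge0_eq; ring.
have F3 : 0 <= p + q * (z1 ^+ 2 + z2 ^+ 2) - 2 * (z1 ^+ 2 + z2 ^+ 2).
  have := Q 1 0 (- z1) (- z2); apply: ge0_eq; ring.
have hZ : 0 <= z1 ^+ 2 + z2 ^+ 2 by rewrite addr_ge0 ?sqr_ge0.
have key : z1 ^+ 2 + z2 ^+ 2 <= p * q.
  have [h0|hpos] : p + q = 0 \/ 0 < p + q.
    by case: (ltrgtP 0 (p + q)) => h; [right | lra | left].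
  - have hp0 : p = 0 by lra.
    have hq0 : q = 0 by lra.
    move: F3; rewrite hp0 hq0; lra.
  - have : 0 <= (p + q) * (p * q - (z1 ^+ 2 + z2 ^+ 2)) by rewrite mulrDl; lra.
    rewrite pmulr_rge0 //; lra.
exists ((p + q) / 2), z1, z2, ((p - q) / 2); split => //; first lra.
have -> : z1 ^+ 2 + z2 ^+ 2 + ((p - q) / 2) ^+ 2 = ((p + q) / 2) ^+ 2 - (p * q - (z1 ^+ 2 + z2 ^+ 2)).
  by field.
lra.
Qed.

Lemma cnorm2_Pm (R : realType) (al d1 d2 d3 x1 y1 x2 y2 : R) :
  cnorm2 (Pm al d1 d2 d3 *m vec2 (Complex x1 y1) (Complex x2 y2)) =
  (al ^+ 2 + (d1 ^+ 2 + d2 ^+ 2 + d3 ^+ 2)) * (x1^+2 + y1^+2 + x2^+2 + y2^+2)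
  + 2 * al * QF 0 d1 d2 d3 x1 y1 x2 y2.
Proof. rewrite Pm_mulv cnorm2_vec2 /QF; ring. Qed.

Lemma opnorm_Pm (R : realType) (al d1 d2 d3 : R) : 0 <= al ->
  opnorm (Pm al d1 d2 d3) = al + Num.sqrt (d1 ^+ 2 + d2 ^+ 2 + d3 ^+ 2).
Proof.
move=> hal.
have hD : 0 <= d1 ^+ 2 + d2 ^+ 2 + d3 ^+ 2 by rewrite !addr_ge0 ?sqr_ge0.
set r : R := Num.sqrt (d1 ^+ 2 + d2 ^+ 2 + d3 ^+ 2).
have r0 : 0 <= r by exact: sqrtr_ge0.
have r2 : r ^+ 2 = d1 ^+ 2 + d2 ^+ 2 + d3 ^+ 2 by rewrite sqr_sqrtr.
rewrite /opnorm; set E := (X in sup X).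
have ub : ubound E (al + r).
  move=> y [v /= Hv <-]; move: Hv; rewrite (vec2E v) cnorm2_vec2 cnorm2_Pm.
  set x1 := complex.Re _; set y1 := complex.Im _; set x2 := complex.Re _; set y2 := complex.Im _.
  move=> HN; rewrite HN; apply: sqrt_le; first by apply: addr_ge0.
  have := dB_le d1 d2 d3 x1 y1 x2 y2; rewrite HN expr1n mulr1 -r2 => h.
  have : QF 0 d1 d2 d3 x1 y1 x2 y2 <= r by apply: sqle'.
  move=> h'; nra.
have inE : E (al + r).
  have [h0|hpos] : r + d3 = 0 \/ 0 < r + d3.
    have : d3 ^+ 2 <= r ^+ 2 by rewrite r2; have := sqr_ge0 d1; have := sqr_ge0 d2; lra.
    move=> h; have : - d3 <= r by apply: sqle' => //; rewrite sqrrN.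
    by case: (ltrgtP 0 (r + d3)) => h1; [right | lra | left].
  - exists (vec2 (Complex 0 0) (Complex 1 0)); first by rewrite /= cnorm2_vec2; ring.
    rewrite cnorm2_Pm /QF -r2.
    have -> : (0 : R) ^+ 2 + 0 ^+ 2 + 1 ^+ 2 + 0 ^+ 2 = 1 by ring.
    have -> : d3 = - r by lra.
    rewrite -(@sq_sqrt _ (al + r)); last by apply: addr_ge0.
    congr Num.sqrt; ring.
  - have rpos : 0 < r.
      have : d3 ^+ 2 <= r ^+ 2 by rewrite r2; have := sqr_ge0 d1; have := sqr_ge0 d2; lra.
      move=> h; have : d3 <= r by apply: sqle'.
      lra.
    have e1 : d1 ^+ 2 = r ^+ 2 - d2 ^+ 2 - d3 ^+ 2 by rewrite r2; ring.
    set s := 2 * r * (r + d3).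
    have spos : 0 < s by rewrite /s !mulr_gt0.
    set t := (Num.sqrt s)^-1.
    have t2 : t ^+ 2 = s^-1 by rewrite /t exprVn sqr_sqrtr // ltW.
    have sne : s != 0 by rewrite gt_eqF.
    have N1 : (t * (r + d3)) ^+ 2 + 0 ^+ 2 + (t * d1) ^+ 2 + (t * d2) ^+ 2 = 1.
      have -> : (t * (r + d3)) ^+ 2 + 0 ^+ 2 + (t * d1) ^+ 2 + (t * d2) ^+ 2
         = t ^+ 2 * ((r + d3) ^+ 2 + d1 ^+ 2 + d2 ^+ 2) by ring.
      rewrite t2.
      have -> : (r + d3) ^+ 2 + d1 ^+ 2 + d2 ^+ 2 = s by rewrite /s e1; ring.
      by rewrite mulVf.
    have B1 : QF 0 d1 d2 d3 (t * (r + d3)) 0 (t * d1) (t * d2) = r.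
      have -> : QF 0 d1 d2 d3 (t * (r + d3)) 0 (t * d1) (t * d2) =
        t ^+ 2 * (d3 * ((r + d3) ^+ 2 - d1 ^+ 2 - d2 ^+ 2) + 2 * (r + d3) * (d1 ^+ 2 + d2 ^+ 2)).
        by rewrite /QF; ring.
      rewrite e1 t2.
      have -> : d3 * ((r + d3) ^+ 2 - (r ^+ 2 - d2 ^+ 2 - d3 ^+ 2) - d2 ^+ 2) +
         2 * (r + d3) * (r ^+ 2 - d2 ^+ 2 - d3 ^+ 2 + d2 ^+ 2) = s * r by rewrite /s; ring.
      by rewrite mulrA mulVf // mul1r.
    exists (vec2 (Complex (t * (r + d3)) 0) (Complex (t * d1) (t * d2))).
      by rewrite /= cnorm2_vec2.
    rewrite cnorm2_Pm N1 B1 -(@sq_sqrt _ (al + r)); last by apply: addr_ge0.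
    congr Num.sqrt; rewrite -r2; ring.
apply/eqP; rewrite eq_le; apply/andP; split.
  by apply: ge_sup => //; exists (al + r).
by apply: sup_upper_bound => //; split; exists (al + r).
Qed.

Lemma sqrt_quarter (R : rcfType) (X Y : R) : X = Y / 4 -> 0 <= Y -> Num.sqrt X = Num.sqrt Y / 2.
Proof.
move=> -> hY.
have -> : Y / 4 = (1 / 2) ^+ 2 * Y by field.
rewrite sqrtrM ?sqr_ge0 // sq_sqrt; first by rewrite mulrC mul1r.
lra.
Qed.

Lemma sum3_ge0 (R : rcfType) (x y z : R) : 0 <= x ^+ 2 + y ^+ 2 + z ^+ 2.
Proof. by rewrite !addr_ge0 ?sqr_ge0. Qed.

Lemma opnorm_sum (R : realType) (a b : 'cV[R]_3) (x y : bool) (Y : R) :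
  Y = (sgn R x * a ord0 ord0 + sgn R y * b ord0 ord0) ^+ 2
    + (sgn R x * a (inord 1) ord0 + sgn R y * b (inord 1) ord0) ^+ 2
    + (sgn R x * a (inord 2) ord0 + sgn R y * b (inord 2) ord0) ^+ 2 ->
  opnorm (dichot a x + dichot b y) = 1 + Num.sqrt Y / 2.
Proof.
move=> HY; rewrite !dichotE addP opnorm_Pm; last lra.
congr (_ + _); first by field.
apply: sqrt_quarter; last by rewrite HY sum3_ge0.
by rewrite HY; field.
Qed.

Lemma tri (R : rcfType) (c1 c2 c3 p1 p2 p3 q1 q2 q3 al1 al2 : R) :
  c1 = 2 * (p1 - q1) -> c2 = 2 * (p2 - q2) -> c3 = 2 * (p3 - q3) ->
  0 <= al1 -> 0 <= al2 ->
  p1 ^+ 2 + p2 ^+ 2 + p3 ^+ 2 <= al1 ^+ 2 -> q1 ^+ 2 + q2 ^+ 2 + q3 ^+ 2 <= al2 ^+ 2 ->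
  Num.sqrt (c1 ^+ 2 + c2 ^+ 2 + c3 ^+ 2) <= 2 * (al1 + al2).
Proof.
move=> -> -> -> h1 h2 hp hq.
set P : R := Num.sqrt (p1 ^+ 2 + p2 ^+ 2 + p3 ^+ 2).
set Q : R := Num.sqrt (q1 ^+ 2 + q2 ^+ 2 + q3 ^+ 2).
have P0 : 0 <= P by apply: sqrtr_ge0.
have Q0 : 0 <= Q by apply: sqrtr_ge0.
have P2 : P ^+ 2 = p1 ^+ 2 + p2 ^+ 2 + p3 ^+ 2 by rewrite sqr_sqrtr // sum3_ge0.
have Q2 : Q ^+ 2 = q1 ^+ 2 + q2 ^+ 2 + q3 ^+ 2 by rewrite sqr_sqrtr // sum3_ge0.
have Pl : P <= al1 by apply: sqle' => //; rewrite P2.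
have Ql : Q <= al2 by apply: sqle' => //; rewrite Q2.
have cs : - (p1 * q1 + p2 * q2 + p3 * q3) <= P * Q.
  apply: sqle'; first exact: mulr_ge0.
  by rewrite sqrrN exprMn P2 Q2; apply: CS3.
apply: sqrt_le; first lra.
have -> : (2 * (p1 - q1)) ^+ 2 + (2 * (p2 - q2)) ^+ 2 + (2 * (p3 - q3)) ^+ 2 =
  4 * (P ^+ 2 + Q ^+ 2 - 2 * (p1 * q1 + p2 * q2 + p3 * q3)) by rewrite P2 Q2; ring.
have : P + Q <= al1 + al2 by lra.
have : 0 <= P + Q by lra.
nra.
Qed.

Lemma sgnT (R : realType) : sgn R true = 1. Proof. by []. Qed.
Lemma sgnF (R : realType) : sgn R false = -1. Proof. by []. Qed.

Lemma sumbool (V : nmodType) (F : bool -> V) : \sum_b F b = F true + F false.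
Proof. by rewrite big_bool. Qed.

Lemma sq_mono (R : rcfType) (x y : R) : 0 <= x -> x <= y -> x ^+ 2 <= y ^+ 2.
Proof. move=> *; nra. Qed.

Lemma compat_suff (R : realType) (a b : 'cV[R]_3) :
  let a1 := a ord0 ord0 in let a2 := a (inord 1) ord0 in let a3 := a (inord 2) ord0 in
  let b1 := b ord0 ord0 in let b2 := b (inord 1) ord0 in let b3 := b (inord 2) ord0 in
  Num.sqrt ((a1 + b1) ^+ 2 + (a2 + b2) ^+ 2 + (a3 + b3) ^+ 2)
  + Num.sqrt ((a1 - b1) ^+ 2 + (a2 - b2) ^+ 2 + (a3 - b3) ^+ 2) <= 2 ->
  compatible (dichot a) (dichot b).
Proof.
move=> a1 a2 a3 b1 b2 b3.
set U : R := Num.sqrt _; set W : R := Num.sqrt _ => hUW.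
have U0 : 0 <= U by apply: sqrtr_ge0.
have W0 : 0 <= W by apply: sqrtr_ge0.
have U2 : U ^+ 2 = (a1 + b1) ^+ 2 + (a2 + b2) ^+ 2 + (a3 + b3) ^+ 2 by rewrite sqr_sqrtr // sum3_ge0.
have W2 : W ^+ 2 = (a1 - b1) ^+ 2 + (a2 - b2) ^+ 2 + (a3 - b3) ^+ 2 by rewrite sqr_sqrtr // sum3_ge0.
pose k := (U - W) / 2.
pose Gf (x y : bool) := Pm ((1 + sgn R x * sgn R y * k) / 4)
   ((sgn R x * a1 + sgn R y * b1) / 4) ((sgn R x * a2 + sgn R y * b2) / 4)
   ((sgn R x * a3 + sgn R y * b3) / 4).
exists (fun p => Gf p.1 p.2); split; [split|split].
- case=> [[] []]; rewrite /Gf /= ?sgnT ?sgnF; apply: psd_Pm.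
  + rewrite /k; lra.
  + have : U ^+ 2 <= (1 + 1 * 1 * k) ^+ 2 by apply: sq_mono; rewrite /k; lra.
    rewrite U2 => h; nra.
  + rewrite /k; lra.
  + have : W ^+ 2 <= (1 + 1 * -1 * k) ^+ 2 by apply: sq_mono; rewrite /k; lra.
    rewrite W2 => h; nra.
  + rewrite /k; lra.
  + have : W ^+ 2 <= (1 + -1 * 1 * k) ^+ 2 by apply: sq_mono; rewrite /k; lra.
    rewrite W2 => h; nra.
  + rewrite /k; lra.
  + have : U ^+ 2 <= (1 + -1 * -1 * k) ^+ 2 by apply: sq_mono; rewrite /k; lra.
    rewrite U2 => h; nra.
- rewrite -(pair_bigA _ (fun x y => Gf x y)) /= !sumbool /Gf !addP -Pm1 ?sgnT ?sgnF.
  congr Pm; by field.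
- move=> x; rewrite sumbool /Gf /= addP dichotE ?sgnT ?sgnF /a1 /a2 /a3 /b1 /b2 /b3 /k; congr Pm; by field.
- move=> y; rewrite sumbool /Gf /= addP dichotE ?sgnT ?sgnF /a1 /a2 /a3 /b1 /b2 /b3 /k; congr Pm; by field.
Qed.

Lemma compat_nec (R : realType) (a b : 'cV[R]_3) :
  let a1 := a ord0 ord0 in let a2 := a (inord 1) ord0 in let a3 := a (inord 2) ord0 in
  let b1 := b ord0 ord0 in let b2 := b (inord 1) ord0 in let b3 := b (inord 2) ord0 in
  compatible (dichot a) (dichot b) ->
  Num.sqrt ((a1 + b1) ^+ 2 + (a2 + b2) ^+ 2 + (a3 + b3) ^+ 2)
  + Num.sqrt ((a1 - b1) ^+ 2 + (a2 - b2) ^+ 2 + (a3 - b3) ^+ 2) <= 2.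
Proof.
move=> a1 a2 a3 b1 b2 b3 [G [[Hpsd _] [H1 H2]]].
have [aTT [pTT1 [pTT2 [pTT3 [ETT hTT1 hTT2]]]]] := Pm_psd (Hpsd (true, true)).
have [aTF [pTF1 [pTF2 [pTF3 [ETF hTF1 hTF2]]]]] := Pm_psd (Hpsd (true, false)).
have [aFT [pFT1 [pFT2 [pFT3 [EFT hFT1 hFT2]]]]] := Pm_psd (Hpsd (false, true)).
have [aFF [pFF1 [pFF2 [pFF3 [EFF hFF1 hFF2]]]]] := Pm_psd (Hpsd (false, false)).
have := H1 true; rewrite sumbool ETT ETF addP dichotE sgnT => /Pm_inj [e1 e2 e3 e4].
have := H1 false; rewrite sumbool EFT EFF addP dichotE sgnF => /Pm_inj [e5 e6 e7 e8].
have := H2 true; rewrite sumbool ETT EFT addP dichotE sgnT => /Pm_inj [e9 e10 e11 e12].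
have := H2 false; rewrite sumbool ETF EFF addP dichotE sgnF => /Pm_inj [e13 e14 e15 e16].
have hU : Num.sqrt ((a1 + b1) ^+ 2 + (a2 + b2) ^+ 2 + (a3 + b3) ^+ 2) <= 2 * (aTT + aFF).
  apply: (tri (p1 := pTT1) (p2 := pTT2) (p3 := pTT3) (q1 := pFF1) (q2 := pFF2) (q3 := pFF3)) => //;
  rewrite /a1 /a2 /a3 /b1 /b2 /b3; lra.
have hW : Num.sqrt ((a1 - b1) ^+ 2 + (a2 - b2) ^+ 2 + (a3 - b3) ^+ 2) <= 2 * (aTF + aFT).
  apply: (tri (p1 := pTF1) (p2 := pTF2) (p3 := pTF3) (q1 := pFT1) (q2 := pFT2) (q3 := pFT3)) => //;
  rewrite /a1 /a2 /a3 /b1 /b2 /b3; lra.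
lra.
Qed.


Lemma sum4 (R : realType) (f : bool -> bool -> R) :
  \sum_(x : bool) \sum_(y : bool) f x y = f true true + f true false + (f false true + f false false).
Proof. by rewrite !big_bool. Qed.

Lemma final (R : realType) (P : Prop) (o1 o2 o3 o4 U W : R) :
  o1 = 1 + U / 2 -> o2 = 1 + W / 2 -> o3 = 1 + W / 2 -> o4 = 1 + U / 2 ->
  (U + W <= 2 -> P) -> (P -> U + W <= 2) ->
  (~ P <-> 1 / 8 * (o1 + o2 + (o3 + o4)) > 3 / 4).
Proof.
move=> -> -> -> -> hs hn; split.
- move=> nC; have [h|h] := leP (U + W) 2.
    by exfalso; apply: nC; apply: hs.
  lra.
- move=> H C; have h := hn C.
  lra.
Qed.

Close Scope complex_scope.
Unset Implicit Arguments.
Set Strict Implicit.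

Theorem proposition2 (R : realType) (a b : 'cV[R]_3) :
  rnorm2 a <= 1 -> rnorm2 b <= 1 ->
  (~ compatible (dichot a) (dichot b) <->
   (1 / 8) * (\sum_(x : bool) \sum_(y : bool)
                opnorm (dichot a x + dichot b y)) > 3 / 4).
Proof.
move=> _ _.
rewrite sum4.
have eTT : opnorm (dichot a true + dichot b true) = 1 + Num.sqrt ((a ord0 ord0 + b ord0 ord0) ^+ 2 + (a (inord 1) ord0 + b (inord 1) ord0) ^+ 2 + (a (inord 2) ord0 + b (inord 2) ord0) ^+ 2) / 2.
  by rewrite (@opnorm_sum R a b true true ((a ord0 ord0 + b ord0 ord0) ^+ 2 + (a (inord 1) ord0 + b (inord 1) ord0) ^+ 2 + (a (inord 2) ord0 + b (inord 2) ord0) ^+ 2)) // sgnT; ring.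
have eTF : opnorm (dichot a true + dichot b false) = 1 + Num.sqrt ((a ord0 ord0 - b ord0 ord0) ^+ 2 + (a (inord 1) ord0 - b (inord 1) ord0) ^+ 2 + (a (inord 2) ord0 - b (inord 2) ord0) ^+ 2) / 2.
  by rewrite (@opnorm_sum R a b true false ((a ord0 ord0 - b ord0 ord0) ^+ 2 + (a (inord 1) ord0 - b (inord 1) ord0) ^+ 2 + (a (inord 2) ord0 - b (inord 2) ord0) ^+ 2)) // sgnT sgnF; ring.
have eFT : opnorm (dichot a false + dichot b true) = 1 + Num.sqrt ((a ord0 ord0 - b ord0 ord0) ^+ 2 + (a (inord 1) ord0 - b (inord 1) ord0) ^+ 2 + (a (inord 2) ord0 - b (inord 2) ord0) ^+ 2) / 2.
  by rewrite (@opnorm_sum R a b false true ((a ord0 ord0 - b ord0 ord0) ^+ 2 + (a (inord 1) ord0 - b (inord 1) ord0) ^+ 2 + (a (inord 2) ord0 - b (inord 2) ord0) ^+ 2)) // sgnT sgnF; ring.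
have eFF : opnorm (dichot a false + dichot b false) = 1 + Num.sqrt ((a ord0 ord0 + b ord0 ord0) ^+ 2 + (a (inord 1) ord0 + b (inord 1) ord0) ^+ 2 + (a (inord 2) ord0 + b (inord 2) ord0) ^+ 2) / 2.
  by rewrite (@opnorm_sum R a b false false ((a ord0 ord0 + b ord0 ord0) ^+ 2 + (a (inord 1) ord0 + b (inord 1) ord0) ^+ 2 + (a (inord 2) ord0 + b (inord 2) ord0) ^+ 2)) // sgnF; ring.
have hs := @compat_suff R a b.
have hn := @compat_nec R a b.
rewrite /= in hs hn.
exact: (final eTT eTF eFT eFF hs hn).
Qed.
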